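(* Let $(A;A^+)$ be an $\mathbb{F}_1$-algebra pair and $(M,\le)$ a partially ordered $A$-module. (i) If $\mathbb{B}(M,\le)$ is finitely generated as a $\mathbb{B}[A;A^+]$-module, then $M$ is finitely generated as an $A$-module. (ii) Suppose $(A;A^+)$ is an $\mathbb{F}_1$-domain. If $\mathbb{B}(M,\le)$ is a projective $\mathbb{B}[A;A^+]$-module, then $M$ is a free $A$-module.
   Context: $(A;A^+)$: $A$ a commutative monoid with zero (multiplicative), $A^+\subseteq A$ a sharp submonoid containing $0$ (only unit $1$). $A$-modules are pointed sets with $A$-action ($0$ acts to the base point); free $A$-modules are wedge sums of copies of $A$. $\mathbb{B}[A;A^+]$ is the idempotent semiring of finitely generated $A^+$-submodules of $A$ ($\vee$ = union, $+$ = elementwise product). A partially ordered $A$-module: $A$-module with a partial order such that $fv\le gv$ whenever $f\in A^+g$, and $v\le w\Rightarrow fv\le fw$ for $f\in A$. $\mathbb{B}(M,\le)$ is the set of $A^+$-submodules of $M$ that are lower sets and are downward closures of finitely generated $A^+$-submodules, a $\mathbb{B}[A;A^+]$-module under union and elementwise multiplication. $(A;A^+)$ is an $\mathbb{F}_1$-domain if $A^+\setminus\{0\}$ is cancellative, $A$ is a localisation of $A^+$, and $A^+$ is integrally closed (saturated) in $A$: $f\in A$ and $f^n\in A^+$ for some $n\ge1$ imply $f\in A^+$. Projective: every surjection onto the module has a section. *)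

(* Defs.v *)
From Stdlib Require Import List.
Import ListNotations.

Section F1Defs.

Variable A : Type.
Variable mul : A -> A -> A.
Variable one zero : A.
Variable Ap : A -> Prop.

Definition is_cmonoid0 : Prop :=
  (forall a b c, mul a (mul b c) = mul (mul a b) c) /\
  (forall a b, mul a b = mul b a) /\
  (forall a, mul one a = a) /\
  (forall a, mul zero a = zero).

(* A^+ is a sharp submonoid containing 0: its only unit is 1. *)
Definition is_sharp_submonoid0 : Prop :=
  Ap one /\ Ap zero /\
  (forall a b, Ap a -> Ap b -> Ap (mul a b)) /\
  (forall a b, Ap a -> Ap b -> mul a b = one -> a = one).

Definition F1_pair : Prop := is_cmonoid0 /\ is_sharp_submonoid0.

Fixpoint mpow (f : A) (n : nat) : A :=
  match n with O => one | S k => mul f (mpow f k) end.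

Definition F1_domain : Prop :=
  F1_pair /\
  ((forall a b, Ap a -> Ap b -> a <> zero -> b <> zero -> mul a b <> zero) /\
   (forall a b c, Ap a -> Ap b -> Ap c -> a <> zero -> b <> zero -> c <> zero ->
                  mul a b = mul a c -> b = c)) /\
  (* A is a localisation of A^+ at some multiplicative subset S of A^+ *)
  (exists Sm : A -> Prop,
      (forall s, Sm s -> Ap s) /\ Sm one /\
      (forall s t, Sm s -> Sm t -> Sm (mul s t)) /\
      (forall s, Sm s -> exists u, mul s u = one) /\
      (forall a, exists s, Sm s /\ Ap (mul s a))) /\
  (* A^+ is integrally closed (saturated) in A *)
  (forall f n, 1 <= n -> Ap (mpow f n) -> Ap f).

(* ---- the semiring B[A;A^+] : finitely generated A^+-submodules of A ---- *)
Definition fg_subA (S : A -> Prop) : Prop :=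
  exists l : list A, forall a,
    S a <-> (a = zero \/ exists h g, Ap h /\ In g l /\ a = mul h g).

Definition B_union {X : Type} (S T : X -> Prop) : X -> Prop := fun a => S a \/ T a.
Definition B_prod (S T : A -> Prop) : A -> Prop :=
  fun a => exists s t, S s /\ T t /\ a = mul s t.
Definition B_zero : A -> Prop := fun a => a = zero.
(* the unit of B[A;A^+] is A^+ itself *)

Variable M : Type.
Variable act : A -> M -> M.
Variable base : M.

Definition is_Amodule : Prop :=
  (forall m, act one m = m) /\
  (forall f g m, act (mul f g) m = act f (act g m)) /\
  (forall m, act zero m = base) /\
  (forall f, act f base = base).

Variable le : M -> M -> Prop.

Definition is_POmodule : Prop :=
  (forall v, le v v) /\
  (forall v w, le v w -> le w v -> v = w) /\
  (forall u v w, le u v -> le v w -> le u w) /\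
  (forall f g v, (exists h, Ap h /\ f = mul h g) -> le (act f v) (act g v)) /\
  (forall f v w, le v w -> le (act f v) (act f w)).

Definition A_fin_gen : Prop :=
  exists l : list M, forall v, v = base \/ exists a m, In m l /\ v = act a m.

(* M is free: the A-module map from the wedge sum of copies of A indexed by I,
   sending the generator of the i-th copy to e i, is bijective.  Elements of
   the wedge sum are the base point and pairs (i,a) with a <> 0. *)
Definition A_free : Prop :=
  exists (I : Type) (e : I -> M),
    (forall i a, a <> zero -> act a (e i) <> base) /\
    (forall i j a b, a <> zero -> b <> zero -> act a (e i) = act b (e j) ->
                     i = j /\ a = b) /\
    (forall v, v <> base -> exists i a, a <> zero /\ v = act a (e i)).

Definition gen_subM (l : list M) : M -> Prop :=
  fun v => v = base \/ exists h m, Ap h /\ In m l /\ v = act h m.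
Definition down (N : M -> Prop) : M -> Prop := fun w => exists v, N v /\ le w v.

Definition inBM (N : M -> Prop) : Prop :=
  (N base /\ forall h v, Ap h -> N v -> N (act h v)) /\
  (forall v w, le w v -> N v -> N w) /\
  (exists l : list M, forall w, N w <-> down (gen_subM l) w).

Definition BMt : Type := {N : M -> Prop | inBM N}.

Definition BM_bot : M -> Prop := fun w => le w base.
Definition BM_act (S : A -> Prop) (N : M -> Prop) : M -> Prop :=
  down (fun w => exists s v, S s /\ N v /\ w = act s v).

Definition BM_fin_gen : Prop :=
  exists gens : list BMt, forall N : BMt,
    exists coeffs : list ((A -> Prop) * BMt),
      (forall c, In c coeffs -> fg_subA (fst c) /\ In (snd c) gens) /\
      proj1_sig N = fold_right (fun c acc => B_union (BM_act (fst c) (proj1_sig (snd c))) acc)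
                               BM_bot coeffs.

Definition is_BModule (P : Type) (addP : P -> P -> P) (zeroP : P)
    (actP : (A -> Prop) -> P -> P) : Prop :=
  (forall x y z, addP x (addP y z) = addP (addP x y) z) /\
  (forall x y, addP x y = addP y x) /\
  (forall x, addP zeroP x = x) /\
  (forall S x y, fg_subA S -> actP S (addP x y) = addP (actP S x) (actP S y)) /\
  (forall S, fg_subA S -> actP S zeroP = zeroP) /\
  (forall S T x, fg_subA S -> fg_subA T ->
     actP (B_union S T) x = addP (actP S x) (actP T x)) /\
  (forall S T x, fg_subA S -> fg_subA T ->
     actP (B_prod S T) x = actP S (actP T x)) /\
  (forall x, actP Ap x = x) /\
  (forall x, actP B_zero x = zeroP).

(* B(M,<=) is projective: every surjective B[A;A^+]-module homomorphism onto
   it has a section that is a B[A;A^+]-module homomorphism. *)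
Definition BM_projective : Prop :=
  forall (P : Type) (addP : P -> P -> P) (zeroP : P) (actP : (A -> Prop) -> P -> P),
    is_BModule P addP zeroP actP ->
    forall p : P -> BMt,
      (forall x y, proj1_sig (p (addP x y)) = B_union (proj1_sig (p x)) (proj1_sig (p y))) ->
      proj1_sig (p zeroP) = BM_bot ->
      (forall S x, fg_subA S -> proj1_sig (p (actP S x)) = BM_act S (proj1_sig (p x))) ->
      (forall N, exists x, p x = N) ->
      exists s : BMt -> P,
        (forall N, p (s N) = N) /\
        (forall N1 N2 N3, proj1_sig N3 = B_union (proj1_sig N1) (proj1_sig N2) ->
                          s N3 = addP (s N1) (s N2)) /\
        (forall N0, proj1_sig N0 = BM_bot -> s N0 = zeroP) /\
        (forall S N N', fg_subA S -> proj1_sig N' = BM_act S (proj1_sig N) ->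
                        s N' = actP S (s N)).

End F1Defs.

(* Main.v *)
Require Import Defs.
From Stdlib Require Import List Classical ClassicalEpsilon FunctionalExtensionality PropExtensionality ProofIrrelevance Lia.
Import ListNotations.

Section Main.
#[local] Set Default Proof Using "All".
Variable A : Type.
Variable mul : A -> A -> A.
Variables one zero : A.
Variable Ap : A -> Prop.
Variable M : Type.
Variable act : A -> M -> M.
Variable base : M.
Variable le : M -> M -> Prop.
Hypothesis HA : F1_pair A mul one zero Ap.
Hypothesis HM : is_Amodule A mul one zero M act base.
Hypothesis Hle : is_POmodule A mul Ap M act le.

Lemma mulA a b c : mul a (mul b c) = mul (mul a b) c.
Proof. destruct HA as [[H _] _]; apply H. Qed.
Lemma mulC a b : mul a b = mul b a.
Proof. destruct HA as [[_ [H _]] _]; apply H. Qed.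
Lemma mul1 a : mul one a = a.
Proof. destruct HA as [[_ [_ [H _]]] _]; apply H. Qed.
Lemma mul1r a : mul a one = a.
Proof. rewrite mulC; apply mul1. Qed.
Lemma mul0 a : mul zero a = zero.
Proof. destruct HA as [[_ [_ [_ H]]] _]; apply H. Qed.
Lemma mul0r a : mul a zero = zero.
Proof. rewrite mulC; apply mul0. Qed.
Lemma Ap1 : Ap one.
Proof. destruct HA as [_ [H _]]; apply H. Qed.
Lemma Ap0 : Ap zero.
Proof. destruct HA as [_ [_ [H _]]]; apply H. Qed.
Lemma ApM a b : Ap a -> Ap b -> Ap (mul a b).
Proof. destruct HA as [_ [_ [_ [H _]]]]; apply H. Qed.
Lemma Apsharp a b : Ap a -> Ap b -> mul a b = one -> a = one.
Proof. destruct HA as [_ [_ [_ [_ H]]]]; apply H. Qed.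

Lemma act1 m : act one m = m.
Proof. destruct HM as [H _]; apply H. Qed.
Lemma actM f g m : act (mul f g) m = act f (act g m).
Proof. destruct HM as [_ [H _]]; apply H. Qed.
Lemma act0 m : act zero m = base.
Proof. destruct HM as [_ [_ [H _]]]; apply H. Qed.
Lemma actb f : act f base = base.
Proof. destruct HM as [_ [_ [_ H]]]; apply H. Qed.

Lemma le_refl v : le v v.
Proof. destruct Hle as [H _]; apply H. Qed.
Lemma le_anti v w : le v w -> le w v -> v = w.
Proof. destruct Hle as [_ [H _]]; apply H. Qed.
Lemma le_trans u v w : le u v -> le v w -> le u w.
Proof. destruct Hle as [_ [_ [H _]]]; apply H. Qed.
Lemma le_Apmul h g v : Ap h -> le (act (mul h g) v) (act g v).
Proof. destruct Hle as [_ [_ [_ [H _]]]]; intro; apply H; eauto. Qed.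
Lemma le_mono f v w : le v w -> le (act f v) (act f w).
Proof. destruct Hle as [_ [_ [_ [_ H]]]]; apply H. Qed.
Lemma le_Ap h v : Ap h -> le (act h v) v.
Proof. intro. rewrite <- (mul1r h). rewrite <- (act1 v) at 2. apply le_Apmul; auto. Qed.
Lemma le_base v : le base v.
Proof. rewrite <- (act0 v). apply le_Ap, Ap0. Qed.
Lemma le_base_eq v : le v base -> v = base.
Proof. intro; apply le_anti; auto using le_base. Qed.

Definition Dp (v : M) : M -> Prop := down M le (gen_subM A Ap M act base [v]).

Lemma Dp_iff v w : Dp v w <-> le w v.
Proof. split.
- intros [u [[Hu|[h [m [Hh [Hm Hu]]]]] Hw]]; subst.
  + eapply le_trans; eauto using le_base.
  + destruct Hm as [Hm|[]]; subst. eapply le_trans; eauto using le_Ap.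
- intros H; exists v; split; auto.
  right; exists one, v; rewrite act1; simpl; auto using Ap1.
Qed.

Lemma Dp_inBM v : inBM A Ap M act base le (Dp v).
Proof. split; [split|split].
- apply Dp_iff, le_base.
- intros h w Hh Hw. apply Dp_iff in Hw. apply Dp_iff. eapply le_trans; [apply le_Ap; eauto|auto].
- intros x y Hxy Hx. apply Dp_iff in Hx. apply Dp_iff; eapply le_trans; eauto.
- exists [v]; intro; tauto.
Qed.

Definition DB (v : M) : BMt A Ap M act base le := exist _ (Dp v) (Dp_inBM v).

Lemma fold_in (coeffs : list ((A -> Prop) * BMt A Ap M act base le)) x :
  fold_right (fun c acc => B_union (BM_act A M act le (fst c) (proj1_sig (snd c))) acc)
     (BM_bot M base le) coeffs x <->
  BM_bot M base le x \/ exists c, In c coeffs /\ BM_act A M act le (fst c) (proj1_sig (snd c)) x.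
Proof. induction coeffs as [|c cs IH]; simpl.
- split; [auto|intros [H|[c [[] _]]]; auto].
- unfold B_union at 1. rewrite IH. split.
  + intros [H|[H|[c' [H1 H2]]]]; eauto.
  + intros [H|[c' [[H1|H1] H2]]]; subst; eauto.
Qed.

Lemma gens_list (gens : list (BMt A Ap M act base le)) :
  exists LL : list M, forall g, In g gens -> forall w, proj1_sig g w ->
    exists u, proj1_sig g u /\ le w u /\ (u = base \/ exists h m, Ap h /\ In m LL /\ u = act h m).
Proof. induction gens as [|g gs [LL IH]].
- exists []; intros g [].
- destruct (proj2_sig g) as [_ [_ [l Hl]]].
  exists (l ++ LL). intros g' [E|Hg'] w Hw.
  + subst g'. apply Hl in Hw. destruct Hw as [u [Hu Hwu]].
    exists u; split; [apply Hl; exists u; split; auto using le_refl|split; auto].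
    destruct Hu as [Hu|[h [m [Hh [Hm Hu]]]]]; auto. right; exists h, m; split; [|split]; auto.
    apply in_or_app; auto.
  + destruct (IH g' Hg' w Hw) as [u [H1 [H2 [H3|[h [m [Hh [Hm Hu]]]]]]]]; exists u; repeat split; auto.
    right; exists h, m; repeat split; auto; apply in_or_app; auto.
Qed.

Lemma part1 : BM_fin_gen A mul zero Ap M act base le -> A_fin_gen A M act base.
Proof.
  intros [gens Hg]. destruct (gens_list gens) as [LL HLL]. exists LL. intro v.
  destruct (Hg (DB v)) as [coeffs [Hc Heq]]. simpl in Heq.
  assert (Hv : Dp v v) by (apply Dp_iff, le_refl).
  rewrite Heq in Hv. apply fold_in in Hv.
  destruct Hv as [Hv|[c [Hin Hv]]].
  - left. apply le_base_eq, Hv.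
  - destruct (Hc c Hin) as [_ Hgen].
    destruct Hv as [z [[s [w [Hs [Hw Hz]]]] Hvz]]; subst z.
    destruct (HLL _ Hgen w Hw) as [u [Hu [Hwu Hu']]].
    assert (Hsu : Dp v (act s u)).
    { rewrite Heq. apply fold_in. right. exists c; split; auto.
      exists (act s u); split; auto using le_refl. exists s, u; auto. }
    apply Dp_iff in Hsu.
    assert (E : v = act s u).
    { apply le_anti; auto. eapply le_trans; eauto. apply le_mono; auto. }
    destruct Hu' as [Hu'|[h [m [Hh [Hm Hu']]]]]; subst u.
    + left. rewrite actb in E; auto.
    + right. exists (mul s h), m. split; auto. rewrite actM; auto.
Qed.

Lemma mul_swap a b c : mul a (mul b c) = mul b (mul a c).
Proof. rewrite !mulA, (mulC a b); reflexivity. Qed.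
Lemma mul_4 a b c d : mul (mul a b) (mul c d) = mul (mul a c) (mul b d).
Proof. rewrite <- !mulA. f_equal. apply mul_swap. Qed.

Definition fgQ (Q : M -> A -> Prop) : Prop :=
  exists L : list (M * A), forall x a,
    Q x a <-> a = zero \/ exists h c, Ap h /\ In (x, c) L /\ a = mul h c.

Definition PT := {Q : M -> A -> Prop | fgQ Q}.

Lemma PT_eq (Q R : PT) : (forall x a, proj1_sig Q x a <-> proj1_sig R x a) -> Q = R.
Proof.
  destruct Q as [Q HQ], R as [R HR]; simpl; intro H.
  assert (Q = R) by (apply functional_extensionality; intro x;
    apply functional_extensionality; intro a; apply propositional_extensionality; auto).
  subst R. f_equal. apply proof_irrelevance.
Qed.

Lemma BMt_eq (N N' : BMt A Ap M act base le) : (forall w, proj1_sig N w <-> proj1_sig N' w) -> N = N'.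
Proof.
  destruct N as [N HN], N' as [N' HN']; simpl; intro H.
  assert (N = N') by (apply functional_extensionality; intro x; apply propositional_extensionality; auto).
  subst N'. f_equal. apply proof_irrelevance.
Qed.

Lemma pred_eq {X : Type} (P Q : X -> Prop) : (forall x, P x <-> Q x) -> P = Q.
Proof. intro H; apply functional_extensionality; intro; apply propositional_extensionality; auto. Qed.

Lemma fgQ_zero Q x : fgQ Q -> Q x zero.
Proof. intros [L HL]; apply HL; auto. Qed.
Lemma fgQ_Ap Q x b h : fgQ Q -> Q x b -> Ap h -> Q x (mul h b).
Proof. intros [L HL] Hb Hh. apply HL in Hb. apply HL.
  destruct Hb as [Hb|[h' [c [Hh' [Hin Hb]]]]]; subst.
  - left; apply mul0r.
  - right. exists (mul h h'), c; repeat split; auto using ApM. apply mulA.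
Qed.

Definition unionQ (Q R : M -> A -> Prop) : M -> A -> Prop := fun x a => Q x a \/ R x a.
Definition zeroQ : M -> A -> Prop := fun x a => a = zero.
Definition actQ (S : A -> Prop) (Q : M -> A -> Prop) : M -> A -> Prop :=
  fun x a => a = zero \/ exists s b, S s /\ Q x b /\ a = mul s b.

Lemma fg_union Q R : fgQ Q -> fgQ R -> fgQ (unionQ Q R).
Proof. intros [L HL] [L' HL']. exists (L ++ L'). intros x a. unfold unionQ.
  rewrite HL, HL'. split.
  - intros [[H|[h [c [H1 [H2 H3]]]]]|[H|[h [c [H1 [H2 H3]]]]]]; auto;
      right; exists h, c; repeat split; auto; apply in_or_app; auto.
  - intros [H|[h [c [H1 [H2 H3]]]]]; auto. apply in_app_or in H2. destruct H2.
    + left; right; eauto. + right; right; eauto.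
Qed.

Lemma fg_zeroQ : fgQ zeroQ.
Proof. exists []. intros x a; unfold zeroQ; split; auto. intros [H|[h [c [_ [[] _]]]]]; auto. Qed.

Lemma fg_actQ S Q : fg_subA A mul zero Ap S -> fgQ Q -> fgQ (actQ S Q).
Proof.
  intros [l Hl] [L HL].
  exists (flat_map (fun g => map (fun p => (fst p, mul g (snd p))) L) l).
  intros x a; unfold actQ. split.
  - intros [H|[s [b [Hs [Hb Ha]]]]]; auto. subst a.
    apply Hl in Hs. apply HL in Hb.
    destruct Hs as [Hs|[h [g [Hh [Hg Hs]]]]]; [subst; left; apply mul0|].
    destruct Hb as [Hb|[h' [c [Hh' [Hc Hb]]]]]; [subst; left; apply mul0r|].
    subst. right. exists (mul h h'), (mul g c). split; [apply ApM; auto|split].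
    + apply in_flat_map. exists g; split; auto. apply in_map_iff. exists (x, c); auto.
    + apply mul_4.
  - intros [H|[h [c [Hh [Hin Ha]]]]]; auto. right.
    apply in_flat_map in Hin. destruct Hin as [g [Hg Hin]]. apply in_map_iff in Hin.
    destruct Hin as [[y c'] [E Hin]]. simpl in E. injection E; intros; subst.
    exists (mul h g), c'. split; [apply Hl; right; exists h, g; auto|split].
    + apply HL. right. exists one, c'. rewrite mul1; auto using Ap1.
    + apply mulA.
Qed.

Definition unionP (Q R : PT) : PT :=
  exist _ (unionQ (proj1_sig Q) (proj1_sig R)) (fg_union _ _ (proj2_sig Q) (proj2_sig R)).
Definition zeroP : PT := exist _ zeroQ fg_zeroQ.
Definition actP (S : A -> Prop) (Q : PT) : PT :=
  match excluded_middle_informative (fg_subA A mul zero Ap S) with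
  | left H => exist _ (actQ S (proj1_sig Q)) (fg_actQ S _ H (proj2_sig Q))
  | right _ => Q
  end.

Lemma actP_fg S Q : fg_subA A mul zero Ap S -> proj1_sig (actP S Q) = actQ S (proj1_sig Q).
Proof. intro H. unfold actP. destruct (excluded_middle_informative _); [reflexivity|contradiction]. Qed.

Lemma fgS_zero S : fg_subA A mul zero Ap S -> S zero.
Proof. intros [l Hl]; apply Hl; auto. Qed.

Lemma fg_union_S S T : fg_subA A mul zero Ap S -> fg_subA A mul zero Ap T -> fg_subA A mul zero Ap (B_union S T).
Proof. intros [l Hl] [l' Hl']. exists (l ++ l'). intro a. unfold B_union. rewrite Hl, Hl'. split.
  - intros [[H|[h [c [H1 [H2 H3]]]]]|[H|[h [c [H1 [H2 H3]]]]]]; auto;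
      right; exists h, c; repeat split; auto; apply in_or_app; auto.
  - intros [H|[h [c [H1 [H2 H3]]]]]; auto. apply in_app_or in H2. destruct H2.
    + left; right; eauto. + right; right; eauto.
Qed.

Lemma fg_prod_S S T : fg_subA A mul zero Ap S -> fg_subA A mul zero Ap T -> fg_subA A mul zero Ap (B_prod A mul S T).
Proof. intros [l Hl] [l' Hl']. exists (flat_map (fun g => map (fun g' => mul g g') l') l).
  intro a. unfold B_prod. split.
  - intros [s [t [Hs [Ht Ha]]]]. subst a. apply Hl in Hs. apply Hl' in Ht.
    destruct Hs as [Hs|[h [g [Hh [Hg Hs]]]]]; [subst; left; apply mul0|].
    destruct Ht as [Ht|[h' [g' [Hh' [Hg' Ht]]]]]; [subst; left; apply mul0r|].
    subst. right. exists (mul h h'), (mul g g'). split; [apply ApM; auto|split; [|apply mul_4]].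
    apply in_flat_map. exists g; split; auto. apply in_map_iff; eauto.
  - intros [H|[h [c [Hh [Hin Ha]]]]].
    + exists zero, zero. split; [apply Hl; auto|split; [apply Hl'; auto|]]. rewrite mul0; auto.
    + apply in_flat_map in Hin. destruct Hin as [g [Hg Hin]]. apply in_map_iff in Hin.
      destruct Hin as [g' [E Hin]]. subst.
      exists (mul h g), g'. split; [apply Hl; right; exists h, g; auto|split; [|apply mulA]].
      apply Hl'. right. exists one, g'. rewrite mul1; auto using Ap1.
Qed.

Lemma fg_Ap : fg_subA A mul zero Ap Ap.
Proof. exists [one]. intro a. split.
  - intro H. right. exists a, one. rewrite mul1r. simpl; auto.
  - intros [H|[h [g [Hh [[Hg|[]] Ha]]]]]; [subst a; apply Ap0|].
    rewrite <- Hg in Ha. subst a. rewrite mul1r; auto.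
Qed.

Lemma fg_Bzero : fg_subA A mul zero Ap (B_zero A zero).
Proof. exists []. intro a; unfold B_zero; split; auto. intros [H|[h [c [_ [[] _]]]]]; auto. Qed.

Lemma P_BModule : is_BModule A mul zero Ap PT unionP zeroP actP.
Proof.
  split; [|split; [|split; [|split; [|split; [|split; [|split; [|split]]]]]]].
  - intros Q R T; apply PT_eq; simpl; unfold unionQ; tauto.
  - intros Q R; apply PT_eq; simpl; unfold unionQ; tauto.
  - intros Q; apply PT_eq; simpl; unfold unionQ, zeroQ. intros x a; split; [|auto].
    intros [H|H]; auto; subst; apply fgQ_zero, proj2_sig.
  - intros S Q R HS; apply PT_eq; intros x a. simpl. rewrite !actP_fg; auto. simpl.
    unfold actQ, unionQ. split.
    + intros [H|[s [b [H1 [[H2|H2] H3]]]]]; eauto 10.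
    + intros [[H|[s [b [H1 [H2 H3]]]]]|[H|[s [b [H1 [H2 H3]]]]]]; eauto 10.
  - intros S HS; apply PT_eq; intros x a. rewrite actP_fg; auto. simpl.
    unfold actQ, zeroQ. split; auto. intros [H|[s [b [H1 [H2 H3]]]]]; subst; auto using mul0r.
  - intros S T Q HS HT; apply PT_eq; intros x a. simpl.
    rewrite !actP_fg; auto using fg_union_S. unfold actQ, unionQ, B_union.
    split.
    + intros [H|[s [b [[H1|H1] [H2 H3]]]]]; eauto 10.
    + intros [[H|[s [b [H1 [H2 H3]]]]]|[H|[s [b [H1 [H2 H3]]]]]]; eauto 10.
  - intros S T Q HS HT; apply PT_eq; intros x a.
    rewrite actP_fg; auto using fg_prod_S. rewrite actP_fg; auto. rewrite actP_fg; auto.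
    unfold actQ, B_prod. split.
    + intros [H|[u [b [[s [t [Hs [Ht Hu]]]] [Hb Ha]]]]]; auto. subst.
      right. exists s, (mul t b). split; auto. split; [right; exists t, b; auto|].
      symmetry; apply mulA.
    + intros [H|[s [b' [Hs [[Hb'|[t [b [Ht [Hb Hb']]]]] Ha]]]]]; auto.
      * subst. left. apply mul0r.
      * subst. right. exists (mul s t), b. split; [exists s, t; auto|split; auto]. apply mulA.
  - intros Q; apply PT_eq; intros x a. rewrite actP_fg; auto using fg_Ap. unfold actQ. split.
    + intros [H|[s [b [Hs [Hb Ha]]]]]; subst. apply fgQ_zero, proj2_sig.
      apply fgQ_Ap; auto. apply proj2_sig.
    + intro H. right. exists one, a. rewrite mul1; auto using Ap1.
  - intros Q; apply PT_eq; intros x a. rewrite actP_fg; auto using fg_Bzero. unfold actQ, B_zero.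
    simpl; unfold zeroQ. split; auto. intros [H|[s [b [Hs [Hb Ha]]]]]; subst; auto using mul0.
Qed.

Definition imgQ (Q : M -> A -> Prop) : M -> Prop := fun w => exists x c, Q x c /\ w = act c x.
Definition pQ (Q : M -> A -> Prop) : M -> Prop := down M le (imgQ Q).

Lemma pQ_inBM (Q : PT) : inBM A Ap M act base le (pQ (proj1_sig Q)).
Proof.
  destruct Q as [Q HQ]; simpl. split; [split|split].
  - exists base. split; auto using le_refl. exists base, zero. split; [apply fgQ_zero; auto|].
    rewrite act0; auto.
  - intros h w Hh [z [[x [c [Hxc Hz]]] Hwz]]. subst z.
    exists (act (mul h c) x). split; [exists x, (mul h c); split; auto; apply fgQ_Ap; auto|].
    rewrite actM. apply le_mono; auto.
  - intros v w Hwv [z [Hz Hvz]]. exists z; split; auto. eapply le_trans; eauto.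
  - destruct HQ as [L HL]. exists (map (fun p => act (snd p) (fst p)) L).
    assert (E1 : forall w, imgQ Q w -> gen_subM A Ap M act base (map (fun p => act (snd p) (fst p)) L) w).
    { intros w [x [c [Hxc Hw]]]. subst w. apply HL in Hxc.
      destruct Hxc as [Hc|[h [c' [Hh [Hin Hc]]]]]; subst c.
      - left; apply act0.
      - right. exists h, (act c' x). split; auto. split; [apply in_map_iff; exists (x, c'); auto|].
        apply actM. }
    assert (E2 : forall w, gen_subM A Ap M act base (map (fun p => act (snd p) (fst p)) L) w -> imgQ Q w).
    { intros w [Hw|[h [m [Hh [Hm Hw]]]]].
      - subst w. exists base, zero. split; [apply HL; auto|]. rewrite act0; auto.
      - apply in_map_iff in Hm. destruct Hm as [[x c] [Em Hin]]. simpl in Em. subst m w.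
        exists x, (mul h c). split; [apply HL; right; exists h, c; auto|]. symmetry; apply actM. }
    intro w. split; intros [z [Hz Hwz]]; exists z; auto.
Qed.

Definition pP (Q : PT) : BMt A Ap M act base le := exist _ (pQ (proj1_sig Q)) (pQ_inBM Q).

Lemma pP_union Q R : proj1_sig (pP (unionP Q R)) = B_union (proj1_sig (pP Q)) (proj1_sig (pP R)).
Proof. apply pred_eq. intro w. simpl. unfold pQ, down, imgQ, B_union, unionQ. split.
  - intros [z [[x [c [[H|H] Hz]]] Hw]]; [left|right]; exists z; split; eauto.
  - intros [[z [[x [c [H Hz]]] Hw]]|[z [[x [c [H Hz]]] Hw]]]; exists z; split; eauto 6.
Qed.

Lemma pP_zero : proj1_sig (pP zeroP) = BM_bot M base le.
Proof. apply pred_eq. intro w. simpl. unfold pQ, down, imgQ, zeroQ, BM_bot. split.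
  - intros [z [[x [c [H Hz]]] Hw]]. subst. rewrite act0 in Hw; auto.
  - intro H. exists base. split; auto. exists base, zero. rewrite act0; auto.
Qed.

Lemma pP_act S Q : fg_subA A mul zero Ap S ->
  proj1_sig (pP (actP S Q)) = BM_act A M act le S (proj1_sig (pP Q)).
Proof. intro HS. apply pred_eq. intro w. simpl. rewrite actP_fg; auto.
  unfold pQ, down, imgQ, actQ, BM_act. split.
  - intros [z [[x [c [H Hz]]] Hw]]. subst z.
    destruct H as [H|[s [b [Hs [Hb Hc]]]]].
    + subst c. exists base. split; [|rewrite act0 in Hw; auto].
      exists zero, base. split; [apply fgS_zero; auto|]. split; [|rewrite act0; auto].
      exists base. split; auto using le_refl. exists base, zero. split; [apply fgQ_zero, proj2_sig|].
      rewrite act0; auto.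
    + subst c. exists (act s (act b x)). split; [|rewrite <- actM; auto].
      exists s, (act b x). split; auto. split; auto. exists (act b x). split; auto using le_refl.
      exists x, b; auto.
  - intros [z [[s [v [Hs [[y [[x [c [Hxc Hy]]] Hvy]] Hz]]]] Hw]]. subst z y.
    exists (act (mul s c) x). split.
    + exists x, (mul s c). split; auto. right. exists s, c; auto.
    + eapply le_trans; eauto. rewrite actM. apply le_mono; auto.
Qed.

Lemma pP_surj N : exists Q, pP Q = N.
Proof.
  destruct (proj2_sig N) as [_ [_ [l Hl]]].
  set (Q := fun x a => a = zero \/ exists h c, Ap h /\ In (x, c) (map (fun m => (m, one)) l) /\ a = mul h c).
  assert (HQ : fgQ Q) by (exists (map (fun m => (m, one)) l); intros x a; split; auto).
  exists (exist _ Q HQ). apply BMt_eq. intro w. simpl. rewrite Hl.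
  unfold pQ, down, imgQ.
  assert (E : forall z, (exists x c, Q x c /\ z = act c x) <-> gen_subM A Ap M act base l z).
  { intro z. split.
    - intros [x [c [[Hc|[h [c' [Hh [Hin Hc]]]]] Hz]]]; subst.
      + left; apply act0.
      + apply in_map_iff in Hin. destruct Hin as [m [Em Hm]]. injection Em; intros E1 E2; subst c' m;
        right. exists h, x. rewrite mul1r. auto.
    - intros [Hz|[h [m [Hh [Hm Hz]]]]].
      + exists base, zero. split; [left; auto|rewrite act0; auto].
      + exists m, h. split; [|auto]. right. exists h, one. rewrite mul1r. split; auto.
        split; auto. apply in_map_iff; eauto. }
  split; intros [z [Hz Hw]]; exists z; split; auto; apply E; auto.
Qed.

Lemma filter_lt {T} (f : T -> bool) (L : list T) x : In x L -> f x = false ->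
  length (filter f L) < length L.
Proof. induction L as [|y L IH]; simpl; [intros []|].
  intros [E|H] Hf.
  - subst. rewrite Hf. pose proof (filter_length_le f L). lia.
  - destruct (f y); simpl; specialize (IH H Hf); lia.
Qed.

Lemma cycle_exists {T} (P : T -> Prop) (R : T -> T -> Prop) : forall n (L : list T),
  length L <= n ->
  (forall x, In x L -> P x -> exists y, In y L /\ P y /\ R x y) ->
  (exists x, In x L /\ P x) -> exists x, P x /\ Relation_Operators.clos_trans T R x x.
Proof.
  induction n as [|n IH]; intros L Hlen Hsucc [x0 [Hx0 Px0]].
  - destruct L; simpl in *; [destruct Hx0|lia].
  - destruct (classic (Relation_Operators.clos_trans T R x0 x0)) as [Hc|Hc]; [eauto|].
    set (f := fun y => if excluded_middle_informative (P y /\ Relation_Operators.clos_trans T R x0 y)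
                       then true else false).
    assert (Hf : forall y, f y = true <-> P y /\ Relation_Operators.clos_trans T R x0 y).
    { intro y; unfold f; destruct (excluded_middle_informative _); split; auto; intros; try discriminate; contradiction. }
    apply (IH (filter f L)).
    + assert (f x0 = false).
      { destruct (f x0) eqn:E; auto. apply Hf in E. destruct E; contradiction. }
      pose proof (filter_lt f L x0 Hx0 H). lia.
    + intros y Hy Py. apply filter_In in Hy. destruct Hy as [Hy Hfy]. apply Hf in Hfy.
      destruct (Hsucc y Hy Py) as [z [Hz [Pz Rz]]]. exists z. split; auto.
      apply filter_In. split; auto. apply Hf. split; auto.
      eapply Relation_Operators.t_trans; [apply Hfy|]. apply Relation_Operators.t_step; auto.
    + destruct (Hsucc x0 Hx0 Px0) as [z [Hz [Pz Rz]]]. exists z. split; auto.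
      apply filter_In. split; auto. apply Hf. split; auto. apply Relation_Operators.t_step; auto.
Qed.

Section Domain.
Hypothesis HD : F1_domain A mul one zero Ap.

Lemma Ap_nzd a b : Ap a -> Ap b -> a <> zero -> b <> zero -> mul a b <> zero.
Proof. destruct HD as [_ [[H _] _]]; apply H. Qed.
Lemma Ap_canc a b c : Ap a -> Ap b -> Ap c -> a <> zero -> b <> zero -> c <> zero ->
  mul a b = mul a c -> b = c.
Proof. destruct HD as [_ [[_ H] _]]; apply H. Qed.
Lemma Ap_int f n : 1 <= n -> Ap (mpow A mul one f n) -> Ap f.
Proof. destruct HD as [_ [_ [_ H]]]; apply H. Qed.

Lemma loc a : exists s u, Ap s /\ mul s u = one /\ Ap (mul s a).
Proof. destruct HD as [_ [_ [[Sm [H1 [_ [_ [Hinv Hloc]]]]] _]]].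
  destruct (Hloc a) as [s [Hs Hsa]]. destruct (Hinv s Hs) as [u Hu]. exists s, u; auto.
Qed.

Lemma inv_zero s u a : mul s u = one -> mul s a = zero -> a = zero.
Proof. intros H1 H2. rewrite <- (mul1 a), <- H1, (mulC s u), <- mulA, H2, mul0r. reflexivity. Qed.

Lemma nzd a b : a <> zero -> b <> zero -> mul a b <> zero.
Proof. intros Ha Hb E.
  destruct (loc a) as [s [u [Hs [Hsu Hsa]]]]. destruct (loc b) as [t [v [Ht [Htv Htb]]]].
  apply (Ap_nzd (mul s a) (mul t b)); auto.
  - intro E'. apply Ha. apply (inv_zero s u a); auto.
  - intro E'. apply Hb. apply (inv_zero t v b); auto.
  - rewrite mul_4, E, mul0r. reflexivity.
Qed.

Lemma re a b c d : mul (mul a b) (mul c d) = mul (mul a c) (mul d b).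
Proof. rewrite mul_4, (mulC b d). reflexivity. Qed.

Lemma canc x y c : c <> zero -> mul x c = mul y c -> x = y.
Proof. intros Hc E.
  destruct (loc c) as [s [u [Hs [Hsu Hsc]]]].
  destruct (loc x) as [t [v [Ht [Htv Htx]]]].
  destruct (loc y) as [t' [v' [Ht' [Htv' Hty]]]].
  assert (Hsc0 : mul s c <> zero) by (intro E'; apply Hc; apply (inv_zero s u c); auto).
  assert (Hinv : mul (mul t t') (mul v v') = one) by (rewrite mul_4, Htv, Htv', mul1; auto).
  destruct (classic (x = zero)) as [Hx|Hx].
  { subst x. rewrite mul0 in E. destruct (classic (y = zero)) as [Hy|Hy]; auto.
    exfalso; apply (nzd y c); auto. }
  destruct (classic (y = zero)) as [Hy|Hy].
  { subst y. rewrite mul0 in E. exfalso; apply (nzd x c); auto. }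
  assert (HX : Ap (mul (mul t t') x)) by (rewrite (mulC t t'), <- mulA; apply ApM; auto).
  assert (HY : Ap (mul (mul t t') y)) by (rewrite <- mulA; apply ApM; auto).
  assert (HX0 : mul (mul t t') x <> zero) by (intro E'; apply Hx; apply (inv_zero (mul t t') (mul v v') x); auto).
  assert (HY0 : mul (mul t t') y <> zero) by (intro E'; apply Hy; apply (inv_zero (mul t t') (mul v v') y); auto).
  assert (E2 : mul (mul t t') x = mul (mul t t') y).
  { apply (Ap_canc (mul s c)); auto.
    rewrite (re s c (mul t t') x), (re s c (mul t t') y), E. reflexivity. }
  assert (Ex : x = mul (mul v v') (mul (mul t t') x)) by (rewrite mulA, (mulC (mul v v')), Hinv, mul1; auto).
  assert (Ey : y = mul (mul v v') (mul (mul t t') y)) by (rewrite mulA, (mulC (mul v v')), Hinv, mul1; auto).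
  rewrite Ex, Ey, E2. reflexivity.
Qed.

Lemma mpow_add d k1 k2 : mpow A mul one d (k1 + k2) = mul (mpow A mul one d k1) (mpow A mul one d k2).
Proof. induction k1; simpl. rewrite mul1; auto. rewrite IHk1, mulA; auto. Qed.

Lemma integral (d : A) (U : A -> Prop) (L : list A) :
  (forall a, U a <-> a = zero \/ exists h g, Ap h /\ In g L /\ a = mul h g) ->
  U one -> (forall b, U b -> U (mul d b)) -> Ap d.
Proof.
  intros HU H1 Hd.
  destruct (classic (d = zero)) as [Hd0|Hd0]; [subst; apply Ap0|].
  set (R := fun g g' => exists h, Ap h /\ mul d g = mul h g').
  assert (Hsucc : forall g, In g L -> g <> zero -> exists g', In g' L /\ g' <> zero /\ R g g').
  { intros g Hg Hg0. assert (U (mul d g)).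
    { apply Hd. apply HU. right. exists one, g. rewrite mul1; auto using Ap1. }
    apply HU in H. destruct H as [H|[h [g' [Hh [Hg' E]]]]].
    - exfalso; apply (nzd d g); auto.
    - exists g'. split; auto. split.
      + intro E'; subst g'. rewrite mul0r in E. apply (nzd d g); auto.
      + exists h; auto. }
  assert (Hne : exists g, In g L /\ g <> zero).
  { apply HU in H1. destruct H1 as [H|[h [g [Hh [Hg E]]]]].
    - exfalso. apply Hd0. rewrite <- (mul1 d), H, mul0. reflexivity.
    - exists g. split; auto. intro E'. subst g. rewrite mul0r in E. apply Hd0. rewrite <- (mul1 d), E, mul0; auto. }
  destruct (cycle_exists (fun g => g <> zero) R (length L) L (le_n _) Hsucc Hne) as [g [Hg0 Hc]].
  assert (Hinv : forall x y, Relation_Operators.clos_trans A R x y ->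
     exists k H, 1 <= k /\ Ap H /\ mul (mpow A mul one d k) x = mul H y).
  { intros x y Hxy. induction Hxy as [x y [h [Hh E]]|x y z _ [k1 [H1' [Hk1 [HH1 E1]]]] _ [k2 [H2 [Hk2 [HH2 E2]]]]].
    - exists 1, h. simpl. rewrite mul1r. auto.
    - exists (k2 + k1), (mul H1' H2). split; [lia|split; [apply ApM; auto|]].
      rewrite mpow_add, <- mulA, E1, mul_swap, E2, mulA. reflexivity. }
  destruct (Hinv g g Hc) as [k [H [Hk [HH E]]]].
  apply (Ap_int d k); auto. rewrite (canc _ _ g Hg0 E). auto.
Qed.
End Domain.

Section Proj.
Hypothesis HD : F1_domain A mul one zero Ap.
Variable sec : BMt A Ap M act base le -> PT.
Hypothesis Hs1 : forall N, pP (sec N) = N.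
Hypothesis Hs2 : forall N1 N2 N3, proj1_sig N3 = B_union (proj1_sig N1) (proj1_sig N2) ->
  sec N3 = unionP (sec N1) (sec N2).
Hypothesis Hs3 : forall N0, proj1_sig N0 = BM_bot M base le -> sec N0 = zeroP.
Hypothesis Hs4 : forall S N N', fg_subA A mul zero Ap S ->
  proj1_sig N' = BM_act A M act le S (proj1_sig N) -> sec N' = actP S (sec N).

Definition T v : M -> A -> Prop := proj1_sig (sec (DB v)).

Lemma T_fg v : fgQ (T v).
Proof. unfold T; apply proj2_sig. Qed.

Lemma T_img v x c : T v x c -> le (act c x) v.
Proof. intro H. pose proof (f_equal (@proj1_sig _ _) (Hs1 (DB v))) as E. simpl in E.
  apply (proj1 (Dp_iff v _)). rewrite <- E.
  exists (act c x). split; auto using le_refl. exists x, c; auto.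
Qed.

Lemma T_lift v : exists x c, T v x c /\ v = act c x.
Proof. pose proof (f_equal (@proj1_sig _ _) (Hs1 (DB v))) as E. simpl in E.
  assert (Hv : Dp v v) by (apply Dp_iff, le_refl).
  rewrite <- E in Hv.
  destruct Hv as [z [[x [c [Hxc Hz]]] Hvz]]. subst z. exists x, c. split; auto.
  apply le_anti; auto. apply T_img; auto.
Qed.

Lemma T_mono w v x c : le w v -> T w x c -> T v x c.
Proof. intros Hwv H.
  assert (E : sec (DB v) = unionP (sec (DB v)) (sec (DB w))).
  { apply Hs2. simpl. apply pred_eq. intro z. unfold B_union. rewrite !Dp_iff. split; auto.
    intros [H1|H1]; auto. eapply le_trans; eauto. }
  unfold T. rewrite E. simpl. right. exact H.
Qed.

Lemma T_zero x c : T base x c -> c = zero.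
Proof. intro H. assert (E : sec (DB base) = zeroP).
  { apply Hs3. simpl. apply pred_eq. intro z. rewrite Dp_iff. unfold BM_bot. tauto. }
  unfold T in H. rewrite E in H. exact H.
Qed.

Definition Sa (a : A) : A -> Prop := fun s => s = zero \/ exists h, Ap h /\ s = mul h a.

Lemma Sa_fg a : fg_subA A mul zero Ap (Sa a).
Proof. exists [a]. intro s. unfold Sa. split.
  - intros [H|[h [Hh E]]]; auto. right. exists h, a. simpl; auto.
  - intros [H|[h [g [Hh [[Hg|[]] E]]]]]; auto. subst g. right; eauto.
Qed.

Lemma T_act_eq a v : T (act a v) = actQ (Sa a) (T v).
Proof.
  assert (E : sec (DB (act a v)) = actP (Sa a) (sec (DB v))).
  { apply Hs4. apply Sa_fg. simpl. apply pred_eq. intro z. rewrite Dp_iff. unfold BM_act, down. split.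
    - intro H. exists (act a v). split; auto. exists a, v. split; [right; exists one; rewrite mul1; auto using Ap1|].
      split; auto. apply Dp_iff, le_refl.
    - intros [y [[s [w [Hs [Hw Hy]]]] Hzy]]. subst y. apply Dp_iff in Hw.
      eapply le_trans; eauto. destruct Hs as [Hs|[h [Hh Hs]]]; subst s.
      + rewrite act0. apply le_base.
      + eapply le_trans; [apply le_mono; eauto|]. apply le_Apmul; auto. }
  unfold T. rewrite E. apply actP_fg, Sa_fg.
Qed.

Lemma T_act_in a v x b h : Ap h -> T v x b -> T (act a v) x (mul (mul h a) b).
Proof. intros Hh H. rewrite T_act_eq. right. exists (mul h a), b. split; [right; eauto|auto]. Qed.

Lemma T_act_out a v x c : T (act a v) x c -> c = zero \/ exists h b, Ap h /\ T v x b /\ c = mul (mul h a) b.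
Proof. rewrite T_act_eq. intros [H|[s [b [[Hs|[h [Hh Hs]]] [Hb Hc]]]]]; auto.
  - subst. left. apply mul0.
  - subst. right. eauto.
Qed.

Definition good x := T x x one.

Lemma good_lift v : v <> base -> exists x c, good x /\ c <> zero /\ v = act c x.
Proof. intro Hv. destruct (T_lift v) as [x [c [H E]]].
  assert (Hc : c <> zero) by (intro; subst; apply Hv; apply act0).
  exists x, c. split; auto. rewrite E in H. apply T_act_out in H.
  destruct H as [H|[h [b [Hh [Hb Ec]]]]]; [contradiction|].
  assert (Ehb : mul h b = one).
  { apply (canc HD _ _ c Hc). rewrite mul1. rewrite Ec at 2.
    rewrite <- !mulA, (mulC b c). reflexivity. }
  unfold good. rewrite <- Ehb. apply fgQ_Ap; auto. apply T_fg.
Qed.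

Lemma torsion e a : good e -> a <> zero -> act a e <> base.
Proof. intros He Ha E. pose proof (T_act_in a e e one one Ap1 He) as H.
  rewrite E in H. apply T_zero in H. rewrite mul1, mul1r in H. auto.
Qed.

Lemma int_good e d : good e -> T e e d -> Ap d.
Proof. intros He Hd.
  destruct (T_fg e) as [L HL].
  apply (integral HD d (T e e) (map snd (filter (fun p => if excluded_middle_informative (fst p = e) then true else false) L))).
  - intro a. rewrite HL. split.
    + intros [H|[h [c [Hh [Hin E]]]]]; auto. right. exists h, c. split; auto. split; auto.
      apply in_map_iff. exists (e, c). split; auto. apply filter_In. split; auto. simpl.
      destruct (excluded_middle_informative _); auto.
    + intros [H|[h [c [Hh [Hin E]]]]]; auto. right. exists h, c. split; auto. split; auto.
      apply in_map_iff in Hin. destruct Hin as [[y c'] [Ec Hin]]. simpl in Ec. subst c'.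
      apply filter_In in Hin. destruct Hin as [Hin Hf]. simpl in Hf.
      destruct (excluded_middle_informative _) as [Ey|]; [subst y; auto|discriminate].
  - exact He.
  - intros b Hb. apply (T_mono (act d e)). apply T_img; auto.
    pose proof (T_act_in d e e b one Ap1 Hb) as H. rewrite mul1 in H. exact H.
Qed.

Lemma uniq_coef e c c' : good e -> c <> zero -> c' <> zero -> act c e = act c' e -> c = c'.
Proof. intros He Hc Hc' E.
  assert (K : forall c c', c <> zero -> c' <> zero -> act c e = act c' e -> exists k, Ap k /\ c = mul k c').
  { clear c c' Hc Hc' E. intros c c' Hc Hc' E.
    pose proof (T_act_in c e e one one Ap1 He) as H. rewrite mul1, mul1r, E in H.
    apply T_act_out in H. destruct H as [H|[h [b [Hh [Hb Ec]]]]]; [contradiction|].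
    apply int_good in Hb; auto. exists (mul h b). split; [apply ApM; auto|].
    rewrite Ec, <- mulA, (mulC c' b), mulA. reflexivity. }
  destruct (K c c' Hc Hc' E) as [k [Hk Ek]].
  destruct (K c' c Hc' Hc (eq_sym E)) as [k' [Hk' Ek']].
  assert (Ekk : mul k k' = one).
  { apply (canc HD _ _ c Hc). rewrite mul1. rewrite Ek at 2. rewrite Ek'. rewrite mulA. reflexivity. }
  apply Apsharp in Ekk; auto. rewrite Ek, Ekk, mul1. reflexivity.
Qed.

Definition eqv x y := exists d d', y = act d x /\ x = act d' y.

Lemma eqv_refl x : eqv x x.
Proof. exists one, one. rewrite act1; auto. Qed.
Lemma eqv_sym x y : eqv x y -> eqv y x.
Proof. intros [d [d' [H1 H2]]]. exists d', d; auto. Qed.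
Lemma eqv_trans x y z : eqv x y -> eqv y z -> eqv x z.
Proof. intros [d [d' [H1 H2]]] [f [f' [H3 H4]]]. exists (mul f d), (mul d' f').
  rewrite !actM, <- H1, <- H3, <- H4, <- H2. auto.
Qed.

Lemma good_equiv x y a b : good x -> good y -> a <> zero -> act a x = act b y -> eqv x y.
Proof. intros Hx Hy Ha E.
  assert (Hw : act a x <> base) by (apply torsion; auto).
  assert (Hb : b <> zero) by (intro; subst b; rewrite act0 in E; auto).
  pose proof (T_act_in a x x one one Ap1 Hx) as H1. rewrite mul1, mul1r, E in H1.
  apply T_act_out in H1. destruct H1 as [H1|[h [d [Hh [Hd Ea]]]]]; [contradiction|].
  pose proof (T_act_in b y y one one Ap1 Hy) as H2. rewrite mul1, mul1r, <- E in H2.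
  apply T_act_out in H2. destruct H2 as [H2|[h' [d' [Hh' [Hd' Eb]]]]]; [contradiction|].
  apply T_img in Hd. apply T_img in Hd'.
  assert (Eu : mul (mul h h') (mul d d') = one).
  { apply (canc HD _ _ a Ha). rewrite mul1. rewrite Ea at 2. rewrite Eb.
    rewrite <- !mulA. f_equal. f_equal. rewrite mulA, mulC, (mulC d d'). reflexivity. }
  exists d, d'. split.
  - apply le_anti.
    + eapply le_trans; [|apply le_mono; exact Hd']. rewrite <- actM.
      rewrite <- (act1 y) at 1. rewrite <- Eu. apply le_Apmul. apply ApM; auto.
    + exact Hd.
  - apply le_anti.
    + eapply le_trans; [|apply le_mono; exact Hd]. rewrite <- actM.
      rewrite <- (act1 x) at 1. rewrite <- Eu. rewrite (mulC d d'). apply le_Apmul. apply ApM; auto.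
    + exact Hd'.
Qed.

Definition Idx := {C : M -> Prop | exists x, good x /\ x <> base /\ C = eqv x}.
Definition eb (i : Idx) : M := proj1_sig (constructive_indefinite_description _ (proj2_sig i)).
Lemma eb_spec i : good (eb i) /\ eb i <> base /\ proj1_sig i = eqv (eb i).
Proof. unfold eb. destruct (constructive_indefinite_description _ _) as [x Hx]. exact Hx. Qed.

Lemma eqv_class x y : eqv x y -> eqv x = eqv y.
Proof. intro H. apply pred_eq. intro z. split; intro H'.
  - eapply eqv_trans; [apply eqv_sym, H|exact H'].
  - eapply eqv_trans; eauto.
Qed.

Lemma free_sec : A_free A zero M act base.
Proof.
  exists Idx, eb. split; [|split].
  - intros i a Ha. destruct (eb_spec i) as [Hg _]. apply torsion; auto.
  - intros i j a b Ha Hb E.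
    destruct (eb_spec i) as [Hgi [_ Ei]]. destruct (eb_spec j) as [Hgj [_ Ej]].
    assert (Hij : i = j).
    { destruct i as [Ci Hi], j as [Cj Hj]. simpl in Ei, Ej. assert (Ci = Cj).
      { rewrite Ei, Ej. apply eqv_class. apply (good_equiv _ _ a b); auto. }
      subst Cj. f_equal. apply proof_irrelevance. }
    subst j. split; auto. eapply uniq_coef; eauto.
  - intros v Hv. destruct (good_lift v Hv) as [x [c [Hx [Hc E]]]].
    assert (Hxb : x <> base) by (intro; subst x; apply Hv; rewrite E; apply actb).
    set (i := exist (fun C => exists x, good x /\ x <> base /\ C = eqv x) (eqv x) (ex_intro _ x (conj Hx (conj Hxb eq_refl))) : Idx).
    destruct (eb_spec i) as [_ [_ Ei]]. simpl in Ei.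
    assert (H : eqv x (eb i)) by (rewrite Ei; apply eqv_refl).
    destruct H as [d [d' [_ H2]]].
    exists i, (mul c d'). split.
    + intro E'. apply Hv. rewrite E, H2, <- actM, E'. apply act0.
    + rewrite E, H2, actM. reflexivity.
Qed.
End Proj.

Lemma part2 : F1_domain A mul one zero Ap -> BM_projective A mul zero Ap M act base le -> A_free A zero M act base.
Proof. intros HD HP.
  destruct (HP PT unionP zeroP actP P_BModule pP pP_union pP_zero pP_act pP_surj)
    as [sec [Hs1 [Hs2 [Hs3 Hs4]]]].
  exact (free_sec HD sec Hs1 Hs2 Hs3 Hs4).
Qed.

Lemma main_sec : (BM_fin_gen A mul zero Ap M act base le -> A_fin_gen A M act base) /\
  (F1_domain A mul one zero Ap -> BM_projective A mul zero Ap M act base le -> A_free A zero M act base).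
Proof. split; [exact part1|exact part2]. Qed.
End Main.

Theorem mainTheorem16 (A : Type) (mul : A -> A -> A) (one zero : A) (Ap : A -> Prop)
  (HA : F1_pair A mul one zero Ap)
  (M : Type) (act : A -> M -> M) (base : M)
  (HM : is_Amodule A mul one zero M act base)
  (le : M -> M -> Prop) (Hle : is_POmodule A mul Ap M act le) :
  (BM_fin_gen A mul zero Ap M act base le -> A_fin_gen A M act base) /\
  (F1_domain A mul one zero Ap ->
   BM_projective A mul zero Ap M act base le -> A_free A zero M act base).
Proof.
  exact (main_sec A mul one zero Ap M act base le HA HM Hle).
Qed.
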